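(* Assume that for every packing $\mathcal{F}$ of unit balls in $\mathbb{E}^3$ containing $\mathbf{B}$, with $\mathbf{P}$ the Voronoi cell of $\mathcal{F}$ assigned to $\mathbf{B}$, one has $\frac{\mathrm{vol}_3(\mathbf{B})}{\mathrm{vol}_3(\mathbf{P}\cap\sqrt2\,\mathbf{B})}<0.7547$. Then for every packing $\{\mathbf{c}_1+\mathbf{B},\dots,\mathbf{c}_n+\mathbf{B}\}$ of $n\ge1$ unit balls in $\mathbb{E}^3$ and $\hat r:=1.58731$, $$\frac{n\,\mathrm{vol}_3(\mathbf{B})}{\mathrm{vol}_3\left(\bigcup_{i=1}^n(\mathbf{c}_i+\hat r\mathbf{B})\right)}<0.7547.$$
   Context: $\mathbf{B}$ is the closed unit ball centered at the origin of $\mathbb{E}^3$; a packing means pairwise disjoint interiors. The Voronoi cell assigned to a ball of the packing is the set of points at least as close to its center as to any other center of the packing. *)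

(* Defs.v *)
From Stdlib Require Import Reals Lra ZArith List.
Open Scope R_scope.

Definition R3 := (R * R * R)%type.

Definition vsub (x y : R3) : R3 :=
  let '(x1, x2, x3) := x in let '(y1, y2, y3) := y in (x1 - y1, x2 - y2, x3 - y3).

Definition norm3 (x : R3) : R :=
  let '(x1, x2, x3) := x in sqrt (x1 * x1 + x2 * x2 + x3 * x3).

Definition dist3 (x y : R3) : R := norm3 (vsub x y).

Definition cball (c : R3) (r : R) (x : R3) : Prop := dist3 x c <= r.
Definition oball (c : R3) (r : R) (x : R3) : Prop := dist3 x c < r.

Definition origin : R3 := (0, 0, 0).

Definition Bunit : R3 -> Prop := cball origin 1.

Definition dcube (k : nat) (ijl : Z * Z * Z) (x : R3) : Prop :=
  let '(i, j, l) := ijl in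
  let '(x1, x2, x3) := x in
  let h := / (2 ^ k) in
  IZR i * h <= x1 <= (IZR i + 1) * h /\
  IZR j * h <= x2 <= (IZR j + 1) * h /\
  IZR l * h <= x3 <= (IZR l + 1) * h.

Definition inner_approx (S : R3 -> Prop) (a : R) : Prop :=
  exists (k : nat) (cs : list (Z * Z * Z)),
    NoDup cs /\
    (forall c, In c cs -> forall x, dcube k c x -> S x) /\
    a = INR (length cs) / (8 ^ k).

(* vol3 S v : v is the (inner Jordan) volume of S. *)
Definition vol3 (S : R3 -> Prop) (v : R) : Prop := is_lub (inner_approx S) v.

(* A (possibly infinite) packing of unit balls, given by its set of centers:
   distinct balls have disjoint interiors. *)
Definition unit_ball_packing (F : R3 -> Prop) : Prop :=
  forall c c', F c -> F c' -> c <> c' ->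
    forall x, ~ (oball c 1 x /\ oball c' 1 x).

Definition voronoi0 (F : R3 -> Prop) (x : R3) : Prop :=
  forall c, F c -> dist3 x origin <= dist3 x c.

(* Main.v *)
Require Import Defs.
From Stdlib Require Import Reals Lra Lia Psatz ZArith List Classical.
Open Scope R_scope.

Lemma coord_ok (p u s : Z) (L : nat) (E x c0 h : R) :
  0 < E -> (0 <= s)%Z -> (s + 1 <= Z.of_nat L - 1)%Z ->
  IZR u > c0 * E -> IZR u - c0 * E <= 1 ->
  h = INR L * / E ->
  IZR (p * Z.of_nat L + u + s) * / E <= x <= (IZR (p * Z.of_nat L + u + s) + 1) * / E ->
  IZR p * h <= x - c0 <= (IZR p + 1) * h.
Proof.
  intros HE Hs Hs2 Hu1 Hu2 Hh [Hx1 Hx2].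
  assert (HiE : 0 < / E) by (apply Rinv_0_lt_compat; lra).
  assert (Hs' : 0 <= IZR s) by (apply IZR_le; lia).
  assert (Hs2' : IZR s + 1 <= INR L - 1).
  { rewrite INR_IZR_INZ. replace (IZR s + 1) with (IZR (s+1)) by (rewrite plus_IZR; ring).
    replace (IZR (Z.of_nat L) - 1) with (IZR (Z.of_nat L - 1)) by (rewrite minus_IZR; ring).
    apply IZR_le; lia. }
  assert (A1 : IZR u * / E > c0).
  { replace c0 with (c0 * E * / E) by (field; lra). apply Rmult_lt_compat_r; lra. }
  assert (A2 : IZR u * / E <= c0 + / E).
  { replace (c0 + / E) with ((c0 * E + 1) * / E) by (field; lra). apply Rmult_le_compat_r; lra. }
  assert (A3 : 0 <= IZR s * / E) by (apply Rmult_le_pos; lra).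
  assert (A4 : (IZR s + 1) * / E <= (INR L - 1) * / E) by (apply Rmult_le_compat_r; lra).
  rewrite !plus_IZR, mult_IZR, <- INR_IZR_INZ in Hx1, Hx2.
  subst h. split; nra.
Qed.

Lemma NoDup_map_on {A B} (f : A -> B) (l : list A) :
  NoDup l -> (forall a b, In a l -> In b l -> f a = f b -> a = b) -> NoDup (map f l).
Proof.
  induction 1 as [|a l Hn Hnd IH]; intros Hi; simpl; constructor.
  - intros Hin. apply in_map_iff in Hin as [b [Hb Hbin]].
    assert (b = a) by (apply Hi; simpl; auto). subst; contradiction.
  - apply IH. intros; apply Hi; simpl; auto.
Qed.

Lemma NoDup_prod {A B} (l1 : list A) (l2 : list B) :
  NoDup l1 -> NoDup l2 -> NoDup (list_prod l1 l2).
Proof.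
  induction 1 as [|a l Hn Hnd IH]; intros H2; simpl; [constructor|].
  apply NoDup_app.
  - apply NoDup_map_on; auto. intros x y _ _ E; inversion E; auto.
  - auto.
  - intros [x y] Hin1 Hin2. apply in_map_iff in Hin1 as [z [Ez _]]. inversion Ez; subst.
    apply in_prod_iff in Hin2 as [Ha _]. contradiction.
Qed.

Lemma zuniq (L p p' s s' : Z) : (0 < L)%Z -> (0 <= s < L)%Z -> (0 <= s' < L)%Z ->
  (p * L + s = p' * L + s')%Z -> p = p' /\ s = s'.
Proof. intros. assert (p = p') by nia. subst; lia. Qed.

Definition sub3 (L : Z) (u1 u2 u3 : Z) (a : (Z*Z*Z) * ((Z*Z)*Z)) : Z*Z*Z :=
  let '((p,q,r),((s1,s2),s3)) := a in ((p*L+u1+s1, q*L+u2+s2), r*L+u3+s3)%Z.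

Lemma refine (S : R3 -> Prop) (c : R3) (k j : nat) (cs : list (Z*Z*Z)) :
  NoDup cs -> (forall d, In d cs -> forall x, dcube k d x -> S x) ->
  exists l, NoDup l /\
    (forall d, In d l -> forall x, dcube (k + j) d x -> S (vsub x c)) /\
    length l = (length cs * ((2^j - 1) * (2^j - 1) * (2^j - 1)))%nat.
Proof.
  intros Hnd Hin. destruct c as [[c1 c2] c3].
  set (E := 2 ^ (k + j)).
  assert (HE : 0 < E) by (apply pow_lt; lra).
  set (Ln := (2 ^ j)%nat).
  assert (HLn : (1 <= Ln)%nat) by (unfold Ln; pose proof (Nat.pow_le_mono_r 2 0 j); simpl in *; lia).
  set (sl := map Z.of_nat (seq 0 (Ln - 1))).
  exists (map (sub3 (Z.of_nat Ln) (up (c1 * E)) (up (c2 * E)) (up (c3 * E)))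
            (list_prod cs (list_prod (list_prod sl sl) sl))).
  assert (Hsl : forall s, In s sl -> (0 <= s)%Z /\ (s + 1 <= Z.of_nat Ln - 1)%Z).
  { intros s Hs. unfold sl in Hs. apply in_map_iff in Hs as [t [Ht Hti]].
    apply in_seq in Hti. subst. lia. }
  assert (Hh : / 2 ^ k = INR Ln * / E).
  { unfold Ln, E. rewrite pow_INR, pow_add. replace (INR 2) with 2 by (simpl; ring). field. split; apply pow_nonzero; lra. }
  split; [|split].
  - apply NoDup_map_on.
    + apply NoDup_prod; auto. apply NoDup_prod; [apply NoDup_prod|];
        unfold sl; apply NoDup_map_on; try apply seq_NoDup; intros; lia.
    + intros [[[p q] r] [[s1 s2] s3]] [[[p' q'] r'] [[s1' s2'] s3']] Ha Hb Hf.
      apply in_prod_iff in Ha as [_ Ha]. apply in_prod_iff in Ha as [Ha a3].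
      apply in_prod_iff in Ha as [a1 a2].
      apply in_prod_iff in Hb as [_ Hb]. apply in_prod_iff in Hb as [Hb b3].
      apply in_prod_iff in Hb as [b1 b2].
      apply Hsl in a1, a2, a3, b1, b2, b3.
      simpl in Hf. inversion Hf as [[H1 H2 H3]].
      destruct (zuniq (Z.of_nat Ln) p p' s1 s1') as [-> ->]; try lia.
      destruct (zuniq (Z.of_nat Ln) q q' s2 s2') as [-> ->]; try lia.
      destruct (zuniq (Z.of_nat Ln) r r' s3 s3') as [-> ->]; try lia.
      reflexivity.
  - intros d Hd x Hx. apply in_map_iff in Hd as [[[[p q] r] [[s1 s2] s3]] [Hd Ha]].
    apply in_prod_iff in Ha as [Hc Ha]. apply in_prod_iff in Ha as [Ha a3].
    apply in_prod_iff in Ha as [a1 a2].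
    apply Hsl in a1, a2, a3.
    apply (Hin _ Hc). subst d. destruct x as [[x1 x2] x3].
    simpl in Hx. fold E in Hx. simpl.
    destruct Hx as [X1 [X2 X3]].
    destruct (archimed (c1 * E)), (archimed (c2 * E)), (archimed (c3 * E)).
    split; [|split]; eapply coord_ok; eauto; tauto.
  - rewrite length_map, !length_prod. unfold sl. rewrite length_map, length_seq. reflexivity.
Qed.

Definition vadd (x y : R3) : R3 :=
  let '(x1, x2, x3) := x in let '(y1, y2, y3) := y in (x1 + y1, x2 + y2, x3 + y3).

Lemma dist_tr x y z : dist3 (vsub x z) (vsub y z) = dist3 x y.
Proof.
  destruct x as [[? ?] ?], y as [[? ?] ?], z as [[? ?] ?]; unfold dist3, norm3; simpl.
  f_equal; ring.
Qed.

Lemma dist_or x z : dist3 (vsub x z) origin = dist3 x z.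
Proof.
  destruct x as [[? ?] ?], z as [[? ?] ?]; unfold dist3, norm3; simpl. f_equal; ring.
Qed.

Lemma vsub_vadd x c : vsub (vadd x c) c = x.
Proof. destruct x as [[? ?] ?], c as [[? ?] ?]; simpl. f_equal; [f_equal|]; ring. Qed.

Lemma vsub_diag c : vsub c c = origin.
Proof. destruct c as [[? ?] ?]; unfold origin; simpl. rewrite !Rminus_diag. reflexivity. Qed.

Lemma dist_self x : dist3 x x = 0.
Proof.
  destruct x as [[? ?] ?]; unfold dist3, norm3; simpl. rewrite !Rminus_diag.
  replace (0*0+0*0+0*0) with 0 by ring. apply sqrt_0.
Qed.

Lemma small_cube (F : R3 -> Prop) : unit_ball_packing F -> F origin ->
  forall x, dcube 2 (0%Z, 0%Z, 0%Z) x -> voronoi0 F x /\ cball origin (sqrt 2) x.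
Proof.
  intros HF H0 [[x1 x2] x3] Hx. simpl in Hx.
  replace (/ (2*(2*1))) with (/4) in Hx by field.
  change (IZR 0) with 0 in Hx. rewrite Rmult_0_l, Rplus_0_l, Rmult_1_l in Hx.
  destruct Hx as [[X1 X1'] [[X2 X2'] [X3 X3']]].
  split.
  - intros [[a1 a2] a3] Ha.
    destruct (Req_dec (a1*a1+a2*a2+a3*a3) 0) as [Z|Z].
    + assert (a1 = 0) by nra. assert (a2 = 0) by nra. assert (a3 = 0) by nra. subst.
      apply Req_le; reflexivity.
    + assert (Hne : (a1,a2,a3) <> origin) by (intro E; inversion E; subst; apply Z; ring).
      assert (Hbig : 4 <= a1*a1+a2*a2+a3*a3).
      { apply Rnot_lt_le. intro Hl. apply (HF _ _ Ha H0 Hne (a1/2, a2/2, a3/2)).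
        unfold oball, dist3, norm3; simpl.
        assert (Hs : forall t, 0 <= t -> t < 1 -> sqrt t < 1).
        { intros t Ht1 Ht2. rewrite <- sqrt_1. apply sqrt_lt_1_alt. lra. }
        split; apply Hs; nra. }
      unfold dist3, norm3; simpl. apply sqrt_le_1_alt.
      assert (0 <= x1 * ((a1-1)*(a1-1))) by (apply Rmult_le_pos; [lra|apply Rle_0_sqr]).
      assert (0 <= x2 * ((a2-1)*(a2-1))) by (apply Rmult_le_pos; [lra|apply Rle_0_sqr]).
      assert (0 <= x3 * ((a3-1)*(a3-1))) by (apply Rmult_le_pos; [lra|apply Rle_0_sqr]).
      assert (x1 * (a1*a1) <= /4 * (a1*a1)) by (apply Rmult_le_compat_r; [nra|lra]).
      assert (x2 * (a2*a2) <= /4 * (a2*a2)) by (apply Rmult_le_compat_r; [nra|lra]).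
      assert (x3 * (a3*a3) <= /4 * (a3*a3)) by (apply Rmult_le_compat_r; [nra|lra]).
      nra.
  - unfold cball, dist3, norm3; simpl. apply sqrt_le_1_alt. nra.
Qed.

Lemma sq_eq x1 x2 x3 a1 a2 a3 b1 b2 b3 :
  dist3 (x1,x2,x3) (a1,a2,a3) = dist3 (x1,x2,x3) (b1,b2,b3) ->
  (x1-a1)*(x1-a1)+(x2-a2)*(x2-a2)+(x3-a3)*(x3-a3) =
  (x1-b1)*(x1-b1)+(x2-b2)*(x2-b2)+(x3-b3)*(x3-b3).
Proof.
  unfold dist3, norm3; simpl. intro H. apply sqrt_inj; [| | exact H]; repeat apply Rplus_le_le_0_compat; apply Rle_0_sqr.
Qed.

Lemma cube_not_bisector m d a b :
  (forall x, dcube m d x -> dist3 x a = dist3 x b) -> a = b.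
Proof.
  destruct d as [[i j] l], a as [[a1 a2] a3], b as [[b1 b2] b3]. intro H.
  set (h := / 2 ^ m).
  assert (Hh : 0 < h) by (apply Rinv_0_lt_compat, pow_lt; lra).
  set (y1 := IZR i * h). set (y2 := IZR j * h). set (y3 := IZR l * h).
  assert (Hc : forall e1 e2 e3, 0 <= e1 <= h -> 0 <= e2 <= h -> 0 <= e3 <= h ->
     dcube m (i,j,l) (y1+e1, y2+e2, y3+e3)).
  { intros. simpl. fold h. unfold y1, y2, y3. lra. }
  assert (E0 := sq_eq _ _ _ _ _ _ _ _ _ (H _ (Hc 0 0 0 ltac:(lra) ltac:(lra) ltac:(lra)))).
  assert (E1 := sq_eq _ _ _ _ _ _ _ _ _ (H _ (Hc h 0 0 ltac:(lra) ltac:(lra) ltac:(lra)))).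
  assert (E2 := sq_eq _ _ _ _ _ _ _ _ _ (H _ (Hc 0 h 0 ltac:(lra) ltac:(lra) ltac:(lra)))).
  assert (E3 := sq_eq _ _ _ _ _ _ _ _ _ (H _ (Hc 0 0 h ltac:(lra) ltac:(lra) ltac:(lra)))).
  assert (F1 : h * (a1 - b1) = 0) by nra.
  assert (F2 : h * (a2 - b2) = 0) by nra.
  assert (F3 : h * (a3 - b3) = 0) by nra.
  apply Rmult_integral in F1 as [F1|F1]; [lra|].
  apply Rmult_integral in F2 as [F2|F2]; [lra|].
  apply Rmult_integral in F3 as [F3|F3]; [lra|].
  f_equal; [f_equal|]; lra.
Qed.

Lemma INR_le_pow2 J : INR J <= 2 ^ J.
Proof.
  induction J; [simpl; lra|]. rewrite S_INR. change (2 ^ S J) with (2 * 2 ^ J).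
  assert (1 <= 2 ^ J) by (apply pow_R1_Rle; lra). lra.
Qed.

Lemma grow (S : R3 -> Prop) (c : R3) t : 0 <= t ->
  (exists k cs, NoDup cs /\ (forall d, In d cs -> forall x, dcube k d x -> S x) /\
      INR (length cs) / 8 ^ k > t) ->
  exists M, forall m, (M <= m)%nat -> exists l, NoDup l /\
     (forall d, In d l -> forall x, dcube m d x -> S (vsub x c)) /\
     INR (length l) / 8 ^ m > t.
Proof.
  intros Ht [k [cs [Hnd [Hin Ha]]]].
  set (a := INR (length cs) / 8 ^ k) in *.
  assert (HA : a = INR (length cs) / 8 ^ k) by reflexivity. clearbody a.
  destruct (INR_archimed 1 (3 * a / (a - t))) as [J HJ]; [lra|].
  exists (k + J)%nat. intros m Hm.
  destruct (refine S c k (m - k) cs Hnd Hin) as [l [Hl1 [Hl2 Hl3]]].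
  replace (k + (m - k))%nat with m in Hl2 by lia.
  exists l. split; [exact Hl1|split; [exact Hl2|]].
  rewrite Hl3.
  assert (Hq1 : (1 <= 2 ^ (m - k))%nat).
  { pose proof (Nat.pow_le_mono_r 2 0 (m-k)); simpl in *; lia. }
  rewrite !mult_INR, minus_INR by exact Hq1. rewrite pow_INR.
  replace (INR 2) with 2 by (simpl; ring). simpl (INR 1).
  set (q := 2 ^ (m - k)).
  assert (HqJ : 2 ^ J <= q) by (apply Rle_pow; [lra|lia]).
  pose proof (INR_le_pow2 J).
  assert (Hq : 3 * a / (a - t) < q) by lra.
  assert (Hat : 0 < a - t) by lra.
  assert (Hq' : 3 * a < q * (a - t)).
  { apply (Rmult_lt_compat_r (a - t)) in Hq; [|lra].
    replace (3 * a / (a - t) * (a - t)) with (3 * a) in Hq by (field; lra). lra. }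
  clear Hq HJ.
  replace (8 ^ m) with (8 ^ k * (q * q * q)).
  2:{ unfold q. rewrite <- !Rpow_mult_distr.
        replace (2*2*2) with 8 by ring. rewrite <- pow_add. f_equal; lia. }
  assert (H8 : 0 < 8 ^ k) by (apply pow_lt; lra).
  assert (Hq0 : 1 <= q) by (unfold q; apply pow_R1_Rle; lra).
  replace (INR (length cs) * ((q - 1) * (q - 1) * (q - 1)) / (8 ^ k * (q * q * q)))
    with (a * (((q - 1) * (q - 1) * (q - 1)) / (q * q * q))) by (rewrite HA; field; lra).
  assert (Hr : 1 - 3 / q <= ((q - 1) * (q - 1) * (q - 1)) / (q * q * q)).
  { apply (Rmult_le_reg_r (q*q*q)); [nra|].
    replace ((q - 1) * (q - 1) * (q - 1) / (q * q * q) * (q * q * q))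
      with ((q - 1) * (q - 1) * (q - 1)) by (field; lra).
    replace ((1 - 3 / q) * (q * q * q)) with (q*q*q - 3*q*q) by (field; lra).
    nra. }
  assert (Ha0 : 0 <= a) by lra.
  assert (a * (1 - 3/q) > t).
  { replace (a * (1 - 3/q)) with (a - 3 * a / q) by (field; lra).
    assert (3 * a / q < a - t).
    { apply (Rmult_lt_reg_r q); [lra|]. replace (3 * a / q * q) with (3 * a) by (field; lra). lra. }
    lra. }
  assert (a * (1 - 3/q) <= a * (((q - 1) * (q - 1) * (q - 1)) / (q * q * q)))
    by (apply Rmult_le_compat_l; lra).
  lra.
Qed.

Lemma combine_cells (T : nat -> R3 -> Prop) n t :
  (forall i, (i < n)%nat -> exists M, forall m, (M <= m)%nat -> exists l, NoDup l /\
     (forall d, In d l -> forall x, dcube m d x -> T i x) /\ INR (length l) / 8 ^ m > t) ->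
  (forall i j m d, (i < n)%nat -> (j < n)%nat -> i <> j ->
     (forall x, dcube m d x -> T i x) -> (forall x, dcube m d x -> T j x) -> False) ->
  forall N, (N < n)%nat -> exists M, forall m, (M <= m)%nat -> exists L, NoDup L /\
     (forall d, In d L -> exists i, (i <= N)%nat /\ forall x, dcube m d x -> T i x) /\
     INR (length L) / 8 ^ m > INR (S N) * t.
Proof.
  intros Hper Hdis. induction N as [|N IH]; intros HN.
  - destruct (Hper 0%nat HN) as [M HM]. exists M. intros m Hm.
    destruct (HM m Hm) as [l [H1 [H2 H3]]]. exists l. split; [exact H1|split].
    + intros d Hd. exists 0%nat. split; [lia|]. apply H2; exact Hd.
    + simpl (INR 1). lra.
  - destruct IH as [M1 HM1]; [lia|]. destruct (Hper (S N) HN) as [M2 HM2].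
    exists (Nat.max M1 M2). intros m Hm.
    destruct (HM1 m ltac:(lia)) as [L [L1 [L2 L3]]].
    destruct (HM2 m ltac:(lia)) as [l [l1 [l2 l3]]].
    exists (L ++ l). split; [|split].
    + apply NoDup_app; auto. intros d HdL Hdl.
      destruct (L2 d HdL) as [i [Hi Hc]].
      apply (Hdis i (S N) m d); try lia. exact Hc. apply l2; exact Hdl.
    + intros d Hd. apply in_app_or in Hd as [Hd|Hd].
      * destruct (L2 d Hd) as [i [Hi Hc]]. exists i; split; [lia|exact Hc].
      * exists (S N); split; [lia|]. apply l2; exact Hd.
    + rewrite length_app, plus_INR, S_INR.
      replace ((INR (length L) + INR (length l)) / 8 ^ m)
        with (INR (length L) / 8 ^ m + INR (length l) / 8 ^ m)
        by (field; apply pow_nonzero; lra).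
      set (u := INR (length L) / 8 ^ m) in *. set (v := INR (length l) / 8 ^ m) in *.
      set (w := INR (S N)) in *. lra.
Qed.

Lemma approx_gt (Hyp : forall (F : R3 -> Prop), unit_ball_packing F -> F origin ->
     forall vB vP : R, vol3 Bunit vB ->
       vol3 (fun x => voronoi0 F x /\ cball origin (sqrt 2) x) vP -> vB / vP < 0.7547)
  F vB : unit_ball_packing F -> F origin -> vol3 Bunit vB ->
  exists k cs, NoDup cs /\
    (forall d, In d cs -> forall x, dcube k d x -> voronoi0 F x /\ cball origin (sqrt 2) x) /\
    INR (length cs) / 8 ^ k > vB / 0.7547.
Proof.
  intros HF H0 HB. apply NNPP. intro Hno.
  set (Sx := fun x => voronoi0 F x /\ cball origin (sqrt 2) x).
  assert (Hub : forall a, inner_approx Sx a -> a <= vB / 0.7547).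
  { intros a [k [cs [H1 [H2 H3]]]]. apply Rnot_lt_le. intro Hlt. apply Hno.
    exists k, cs. subst a. split; [exact H1|split; [exact H2|exact Hlt]]. }
  assert (Hsm : inner_approx Sx (1/64)).
  { exists 2%nat, ((0%Z,0%Z,0%Z) :: nil). split; [repeat constructor; simpl; tauto|split].
    - intros d [Hd|[]] x Hx. subst d. apply small_cube; auto.
    - simpl. field. }
  destruct (completeness (inner_approx Sx)) as [vP HvP].
  - exists (vB / 0.7547). exact Hub.
  - exists (1/64). exact Hsm.
  - assert (Hp1 : 1/64 <= vP) by (apply HvP; exact Hsm).
    assert (Hp2 : vP <= vB / 0.7547) by (apply HvP; exact Hub).
    pose proof (Hyp F HF H0 vB vP HB HvP) as Hr.
    assert (vB < 0.7547 * vP).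
    { apply (Rmult_lt_compat_r vP) in Hr; [|lra].
      assert (Hq : vB / vP * vP = vB) by (field; lra). rewrite Hq in Hr. lra. }
    set (z := vB / 0.7547) in *. assert (vB = 0.7547 * z) by (unfold z; field; lra).
    lra.
Qed.

Theorem mainTheorem13 :
  (forall (F : R3 -> Prop), unit_ball_packing F -> F origin ->
     forall vB vP : R,
       vol3 Bunit vB ->
       vol3 (fun x => voronoi0 F x /\ cball origin (sqrt 2) x) vP ->
       vB / vP < 0.7547) ->
  forall (n : nat) (c : nat -> R3),
    (1 <= n)%nat ->
    (forall i j, (i < n)%nat -> (j < n)%nat -> i <> j ->
       forall x, ~ (oball (c i) 1 x /\ oball (c j) 1 x)) ->
    forall vB vU : R,
      vol3 Bunit vB ->
      vol3 (fun x => exists i, (i < n)%nat /\ cball (c i) 1.58731 x) vU ->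
      INR n * vB / vU < 0.7547.
Proof.
  intros Hyp n c Hn Hpack vB vU HB HU.
  set (Fi := fun i y => exists j, (j < n)%nat /\ y = vsub (c j) (c i)).
  set (T := fun i x => voronoi0 (Fi i) (vsub x (c i)) /\ cball origin (sqrt 2) (vsub x (c i))).
  set (t := vB / 0.7547).
  assert (HB0 : 0 <= vB).
  { apply HB. exists 0%nat, nil. split; [constructor|split]; [intros _ []|simpl; field]. }
  assert (Ht : 0 <= t) by (unfold t; lra).
  assert (Hcne : forall i j, (i < n)%nat -> (j < n)%nat -> i <> j -> c i <> c j).
  { intros i j Hi Hj Hij E. apply (Hpack i j Hi Hj Hij (c i)).
    unfold oball. rewrite <- E. rewrite dist_self. lra. }
  assert (HFp : forall i, (i < n)%nat -> unit_ball_packing (Fi i)).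
  { intros i Hi y y' [j [Hj ->]] [j' [Hj' ->]] Hne x [Ho1 Ho2].
    assert (Hjj : j <> j') by (intro; subst; apply Hne; reflexivity).
    apply (Hpack j j' Hj Hj' Hjj (vadd x (c i))). unfold oball in *.
    rewrite <- (vsub_vadd x (c i)) in Ho1, Ho2. rewrite dist_tr in Ho1, Ho2. tauto. }
  assert (HF0 : forall i, (i < n)%nat -> Fi i origin).
  { intros i Hi. exists i. split; [exact Hi|]. symmetry; apply vsub_diag. }
  assert (Hper : forall i, (i < n)%nat -> exists M, forall m, (M <= m)%nat -> exists l, NoDup l /\
     (forall d, In d l -> forall x, dcube m d x -> T i x) /\ INR (length l) / 8 ^ m > t).
  { intros i Hi. apply (grow (fun y => voronoi0 (Fi i) y /\ cball origin (sqrt 2) y) (c i) t Ht). apply (approx_gt Hyp _ vB); auto. }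
  assert (Hdis : forall i j m d, (i < n)%nat -> (j < n)%nat -> i <> j ->
     (forall x, dcube m d x -> T i x) -> (forall x, dcube m d x -> T j x) -> False).
  { intros i j m d Hi Hj Hij Ti Tj. apply (Hcne i j Hi Hj Hij).
    apply (cube_not_bisector m d). intros x Hx.
    destruct (Ti x Hx) as [V1 _]. destruct (Tj x Hx) as [V2 _].
    assert (A1 := V1 (vsub (c j) (c i)) ltac:(exists j; auto)).
    assert (A2 := V2 (vsub (c i) (c j)) ltac:(exists i; auto)).
    rewrite dist_or, dist_tr in A1, A2. lra. }
  destruct (combine_cells T n t Hper Hdis (n - 1) ltac:(lia)) as [M HM].
  destruct (HM M (le_n M)) as [L [L1 [L2 L3]]].
  replace (S (n - 1)) with n in L3 by lia.
  assert (HvU : INR (length L) / 8 ^ M <= vU).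
  { apply HU. exists M, L. split; [exact L1|split; [|reflexivity]].
    intros d Hd x Hx. destruct (L2 d Hd) as [i [Hi Hc]]. exists i. split; [lia|].
    destruct (Hc x Hx) as [_ Hb]. unfold cball in *. rewrite dist_or in Hb.
    assert (sqrt 2 <= 1.58731).
    { rewrite <- (sqrt_square 1.58731) by lra. apply sqrt_le_1_alt. lra. }
    lra. }
  set (u := INR (length L) / 8 ^ M) in *.
  assert (Hn1 : 1 <= INR n) by (apply (le_INR 1); exact Hn).
  assert (Hlt : INR n * vB < 0.7547 * vU).
  { assert (vB = 0.7547 * t) by (unfold t; field; lra).
    set (w := INR n) in *. nra. }
  assert (HvU0 : 0 < vU) by nra.
  apply (Rmult_lt_reg_r vU); [lra|].
  unfold Rdiv. rewrite Rmult_assoc, Rinv_l, Rmult_1_r by lra. lra.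
Qed.
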